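(* Let $S_N$ be the star graph on $N\ge 2$ vertices with center $c$ and leaves $\ell_1,\dots,\ell_{N-1}$, and let $\delta\in[0,1]$. Then for each $i\in\{1,\dots,N-1\}$, $$\mathsf{fp}_{r=1}^{\delta}(S_N,\{\ell_i\})=\frac{1+(1-\delta)(N-2)}{(1-\delta)(N-2)^2+2(N-1)}\quad\text{and}\quad\mathsf{fp}_{r=1}^{\delta}(S_N,\{c\})=\frac{1+\delta(N-2)}{(1-\delta)(N-2)^2+2(N-1)}.$$
   Context: Mixed $\delta$-updating on an undirected unweighted graph $G=(V,E)$: each vertex holds a mutant (fitness $r$) or wild-type (fitness $1$); $f_S(u)$ is the fitness at $u$ when $S$ is the mutant set. At each step, with probability $\delta$ a death-Birth step: choose $v$ uniformly to die, choose a neighbor $u$ of $v$ with probability proportional to $f_S(u)$, $u$ copies its type onto $v$; with probability $1-\delta$ a Birth-death step: choose $u$ with probability proportional to $f_S(u)$ among all vertices, choose a uniformly random neighbor $v$ of $u$, $u$ copies its type onto $v$. $\mathsf{fp}_r^\delta(G,S_0)$ is the probability that all vertices eventually become mutant from initial mutant set $S_0$. *)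

(* Defs.v *)
From HB Require Import structures.
From mathcomp Require Import all_boot all_order all_algebra.
From mathcomp Require Import boolp classical_sets reals topology normedtype sequences.
Set Implicit Arguments. Unset Strict Implicit. Unset Printing Implicit Defensive.
Import Order.TTheory GRing.Theory Num.Theory numFieldNormedType.Exports.
Local Open Scope classical_set_scope.
Local Open Scope ring_scope.

Section MixedUpdating.
Variable R : realType.
Variables (V : finType) (e : rel V).   (* e : symmetric irreflexive adjacency *)

Definition fit (r : R) (S : {set V}) (u : V) : R := if u \in S then r else 1.

(* vertex v takes type b (true = mutant) *)
Definition upd (S : {set V}) (v : V) (b : bool) : {set V} :=
  if b then v |: S else S :\ v.

(* death-Birth step: v uniform dies, neighbour u chosen prop. to fitness,
   u copies its type onto v *)
Definition dB_trans (r : R) (S S' : {set V}) : R :=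
  \sum_(v : V) (#|V|%:R)^-1 *
    \sum_(u : V | e v u)
      (fit r S u / \sum_(w : V | e v w) fit r S w) * (S' == upd S v (u \in S))%:R.

(* Birth-death step: u chosen prop. to fitness among all vertices,
   v uniform neighbour of u, u copies its type onto v *)
Definition Bd_trans (r : R) (S S' : {set V}) : R :=
  \sum_(u : V) (fit r S u / \sum_(w : V) fit r S w) *
    \sum_(v : V | e u v)
      (#|[set w | e u w]|%:R)^-1 * (S' == upd S v (u \in S))%:R.

Definition trans (delta r : R) (S S' : {set V}) : R :=
  delta * dB_trans r S S' + (1 - delta) * Bd_trans r S S'.

Fixpoint tprob (delta r : R) (t : nat) (S0 S : {set V}) : R :=
  match t with
  | 0 => (S0 == S)%:R
  | t'.+1 => \sum_(S1 : {set V}) tprob delta r t' S0 S1 * trans delta r S1 S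
  end.

(* Since [set: V] is absorbing, the event "all vertices eventually mutant" is the
   increasing union of the events "mutant set = [set: V] at time t";
   fp_r^delta(G,S0) = p means these probabilities converge to p. *)
Definition fp_is (delta r : R) (S0 : {set V}) (p : R) : Prop :=
  (fun t : nat => tprob delta r t S0 [set: V]) @ \oo --> p.

End MixedUpdating.

Definition star (N : nat) (c : 'I_N) : rel 'I_N :=
  fun u v => (u != v) && ((u == c) || (v == c)).

(* Main.v *)
Require Import Defs.
From HB Require Import structures.
From mathcomp Require Import all_boot all_order all_algebra.
From mathcomp Require Import boolp classical_sets reals topology normedtype sequences.
From mathcomp Require Import ring lra.
Import Order.TTheory GRing.Theory Num.Theory numFieldNormedType.Exports.
Local Open Scope ring_scope.

Section Star.
Variable R : realType.
Variable n : nat.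
Variable c : 'I_n.+2.

Lemma star_nb v (g : 'I_n.+2 -> R) : \sum_(w | star c v w) g w = if v == c then \sum_(w | w != c) g w else g c.
Proof.
case: eqP => [->|/eqP vc].
  by apply: eq_bigl => w; rewrite /star eqxx orTb andbT eq_sym.
rewrite (big_pred1 c) // => w; rewrite /star (negbTE vc) /=.
by case: (eqVneq w c) => [->|wc]; rewrite ?vc ?eqxx ?(negbTE wc) ?andbF.
Qed.

Lemma star_pairs (F : 'I_n.+2 -> 'I_n.+2 -> R) :
  \sum_v \sum_(u | star c v u) F v u = \sum_(l | l != c) (F c l + F l c).
Proof.
rewrite (bigD1 c) //= star_nb eqxx.
under eq_bigr => v vc do rewrite star_nb (negbTE vc).
by rewrite big_split.
Qed.

Lemma leaves_const (k : R) : \sum_(l | l != c) k = k * n.+1%:R.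
Proof.
rewrite sumr_const mulr_natr; congr (_ *+ _).
rewrite cardC1 card_ord //.
Qed.

Lemma pick_set (X : {set 'I_n.+2}) (a : R) (f : {set 'I_n.+2} -> R) :
  \sum_S' a * (S' == X)%:R * f S' = a * f X.
Proof.
rewrite (bigD1 X) //= eqxx mulr1 big1 ?addr0 // => S' /negbTE ->.
by rewrite mulr0 mul0r.
Qed.
Lemma pick_set2 (X : {set 'I_n.+2}) (a b : R) (f : {set 'I_n.+2} -> R) :
  \sum_S' a * (b * (S' == X)%:R) * f S' = a * b * f X.
Proof.
rewrite (bigD1 X) //= eqxx mulr1 big1 ?addr0 // => S' /negbTE ->.
by rewrite mulr0 mulr0 mul0r.
Qed.

Lemma fit1 (S : {set 'I_n.+2}) u : fit (1:R) S u = 1.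
Proof. by rewrite /fit if_same. Qed.

Lemma dBE S (f : {set 'I_n.+2} -> R) : \sum_S' dB_trans (star c) 1 S S' * f S' =
  \sum_(l | l != c) (n.+2%:R^-1 * n.+1%:R^-1 * f (upd S c (l \in S)) + n.+2%:R^-1 * f (upd S l (c \in S))).
Proof.
rewrite /dB_trans.
under eq_bigr => S' _ do rewrite big_distrl /=.
rewrite exchange_big /=.
under eq_bigr => v _ do (under eq_bigr => S' _ do rewrite big_distrr big_distrl /=; rewrite exchange_big /=).
under eq_bigr => v _ do under eq_bigr => u _ do rewrite pick_set2.
rewrite star_pairs; apply: eq_bigr => l lc.
rewrite !star_nb eqxx (negbTE lc) !fit1 card_ord.
under eq_bigr do rewrite fit1.
by rewrite leaves_const !mul1r invr1 mulr1.
Qed.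
Lemma card_nb v : (#|[set w | star c v w]%classic|%:R : R) = if v == c then n.+1%:R else 1.
Proof.
have -> : (#|[set w | star c v w]%classic|%:R : R) = \sum_(w | star c v w) 1.
  rewrite sumr_const; congr (_%:R); apply: eq_card => w.
  apply/idP/idP; rewrite in_setE /= ?inE /=; by [].
rewrite star_nb; case: eqP => // _.
by rewrite leaves_const mul1r.
Qed.

Lemma BdE S (f : {set 'I_n.+2} -> R) : \sum_S' Bd_trans (star c) 1 S S' * f S' =
  \sum_(l | l != c) (n.+2%:R^-1 * f (upd S c (l \in S)) + n.+2%:R^-1 * n.+1%:R^-1 * f (upd S l (c \in S))).
Proof.
rewrite /Bd_trans.
under eq_bigr => S' _ do rewrite big_distrl /=.
rewrite exchange_big /=.
under eq_bigr => v _ do (under eq_bigr => S' _ do rewrite big_distrr big_distrl /=; rewrite exchange_big /=).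
under eq_bigr => v _ do under eq_bigr => u _ do rewrite pick_set2.
rewrite star_pairs; apply: eq_bigr => l lc.
rewrite !card_nb eqxx (negbTE lc) !fit1.
under eq_bigr do rewrite fit1.
rewrite sumr_const card_ord mul1r invr1 mulr1 addrC.
by rewrite -mulr_natr mul1r.
Qed.
Variable d : R.
Hypothesis hd0 : 0 <= d.
Hypothesis hd1 : d <= 1.

Definition NN : R := n.+2%:R.
Definition MM : R := n.+1%:R.
Definition AA : R := 1 + (1 - d) * n%:R.
Definition BB : R := 1 + d * n%:R.
Definition DD : R := (1 - d) * n%:R ^+ 2 + 2 * n.+1%:R.
Definition alpha : R := AA / (NN * MM).
Definition beta : R := BB / (NN * MM).

Lemma NN_gt0 : 0 < NN. Proof. by rewrite /NN ltr0Sn. Qed.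
Lemma MM_gt0 : 0 < MM. Proof. by rewrite /MM ltr0Sn. Qed.
Lemma AA_gt0 : 0 < AA.
Proof. by rewrite /AA ltr_wpDr ?ltr01 // mulr_ge0 ?subr_ge0 ?ler0n. Qed.
Lemma BB_gt0 : 0 < BB.
Proof. by rewrite /BB ltr_wpDr ?ltr01 // mulr_ge0 ?ler0n. Qed.
Lemma DD_gt0 : 0 < DD.
Proof.
rewrite /DD ltr_wpDl //; last by rewrite mulr_gt0 ?ltr0Sn.
by rewrite mulr_ge0 ?subr_ge0 ?exprn_ge0 ?ler0n.
Qed.

Definition Eop (f : {set 'I_n.+2} -> R) S :=
  \sum_(l | l != c) (alpha * f (upd S c (l \in S)) + beta * f (upd S l (c \in S))).

Lemma transE S (f : {set 'I_n.+2} -> R) :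
  \sum_S' trans (star c) d 1 S S' * f S' = Eop f S.
Proof.
rewrite /trans.
under eq_bigr do rewrite mulrDl -!mulrA.
rewrite big_split -!big_distrr /= dBE BdE !big_distrr -big_split /=.
apply: eq_bigr => l _.
rewrite /alpha /beta /AA /BB.
have hN := NN_gt0; have hM := MM_gt0.
rewrite /NN /MM in hN hM *.
field.
by rewrite !gt_eqF // ltr_wpDr ?ler0n ?ltr01 ?ltr0n.
Qed.
Lemma posf : [/\ 0 < 1 + n%:R :> R, 0 < 2 + n%:R :> R &
   0 < (1 - d) * n%:R ^+ 2 + 2 * (1 + n%:R)].
Proof.
have e1 : (n.+1%:R : R) = 1 + n%:R by rewrite nat1r.
have := DD_gt0; rewrite /DD e1 => ->.
by rewrite !ltr_wpDr ?ler0n ?ltr01 ?ltr0n.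
Qed.

Ltac nzt := case: posf => ? ? ?; rewrite ?gt_eqF //.

Definition pi (x : 'I_n.+2) : R := if x == c then BB / DD else AA / DD.
Definition h (S : {set 'I_n.+2}) : R := \sum_x pi x * (x \in S)%:R.

Lemma pi_ge0 x : 0 <= pi x.
Proof.
by rewrite /pi; case: ifP => _; rewrite divr_ge0 // ltW // ?AA_gt0 ?BB_gt0 ?DD_gt0.
Qed.

Lemma h_upd S v b : h (upd S v b) = h S + pi v * (b%:R - (v \in S)%:R).
Proof.
rewrite /h (bigD1 v) //= [in RHS](bigD1 v) //=.
have -> : \sum_(x | x != v) pi x * (x \in upd S v b)%:R = \sum_(x | x != v) pi x * (x \in S)%:R.
  apply: eq_bigr => x xv; rewrite /upd; case: b; by rewrite !inE (negbTE xv).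
rewrite /upd; case: b; rewrite !inE eqxx /=; case: (v \in S) => /=; ring.
Qed.

Lemma sum_pi : \sum_x pi x = 1.
Proof.
rewrite (bigD1 c) //= /pi eqxx.
rewrite (eq_bigr (fun _ => AA / DD)); last by move=> x /negbTE ->.
rewrite leaves_const /AA /BB.
have hD := DD_gt0; rewrite /DD in hD *.
  rewrite /DD; field; nzt.
Qed.

Lemma h_ge0 S : 0 <= h S.
Proof. by apply: sumr_ge0 => x _; rewrite mulr_ge0 ?pi_ge0 ?ler0n. Qed.

Lemma h_le1 S : h S <= 1.
Proof.
rewrite -sum_pi; apply: ler_sum => x _.
rewrite -[leRHS]mulr1 ler_wpM2l ?pi_ge0 //.
by case: (x \in S); rewrite ?ler01 ?lexx.
Qed.

Lemma hT : h [set: 'I_n.+2] = 1.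
Proof. rewrite -sum_pi; apply: eq_bigr => x _; by rewrite inE mulr1. Qed.

Lemma h0 : h finset.set0 = 0.
Proof. by apply: big1 => x _; rewrite inE mulr0. Qed.

Lemma h1 i : h [set i] = pi i.
Proof.
rewrite /h (bigD1 i) //= inE eqxx mulr1 big1 ?addr0 // => x xi.
by rewrite inE (negbTE xi) mulr0.
Qed.

Lemma Eh S : Eop h S = h S.
Proof.
rewrite /Eop.
rewrite (eq_bigr (fun _ => h S / MM)); last first.
  move=> l lc; rewrite !h_upd /pi eqxx (negbTE lc) /alpha /beta /AA /BB /NN /MM.
  rewrite /DD; field; nzt.
rewrite leaves_const /MM; field; nzt.
Qed.

Definition gam : R := alpha * (BB / DD) ^+ 2 + beta * (AA / DD) ^+ 2.

Lemma Eh2 S : Eop (fun S => h S ^+ 2) S = h S ^+ 2 +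
  \sum_(l | l != c) gam * ((l \in S)%:R - (c \in S)%:R) ^+ 2.
Proof.
rewrite /Eop.
have -> : h S ^+ 2 = \sum_(l | l != c) h S ^+ 2 / MM.
  rewrite leaves_const /MM; field; nzt.
rewrite -big_split /=; apply: eq_bigr => l lc.
rewrite !h_upd /gam /pi eqxx (negbTE lc) /alpha /beta /AA /BB /NN /MM.
rewrite /DD; field; nzt.
Qed.
Definition tr (S : {set 'I_n.+2}) : R := ((S != finset.set0) && (S != [set: 'I_n.+2]))%:R.

Lemma trans_ex S : S != finset.set0 -> S != [set: 'I_n.+2] ->
  exists2 l, l != c & (l \in S) != (c \in S).
Proof.
move=> /set0Pn [a aS] /negP ST.
have [b bS] : exists b, b \notin S.
  case: (pickP (fun x => x \notin S)) => [b bS|H]; first by exists b.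
  exfalso; apply: ST; apply/eqP/setP => x; rewrite inE.
  by move/negbFE: (H x) => ->.
case cS: (c \in S).
- exists b; last by rewrite (negbTE bS).
  by apply/eqP => bc; rewrite bc cS in bS.
- exists a; last by rewrite aS.
  by apply/eqP => ac; rewrite ac cS in aS.
Qed.

Lemma gam_gt0 : 0 < gam.
Proof.
rewrite /gam /alpha /beta ltr_wpDr //.
  by rewrite mulr_ge0 ?exprn_ge0 ?divr_ge0 ?ltW ?AA_gt0 ?BB_gt0 ?DD_gt0 ?mulr_gt0 ?NN_gt0 ?MM_gt0.
by rewrite mulr_gt0 ?exprn_gt0 ?divr_gt0 ?AA_gt0 ?BB_gt0 ?DD_gt0 ?mulr_gt0 ?NN_gt0 ?MM_gt0.
Qed.

Lemma Eh2_ge S : h S ^+ 2 + gam * tr S <= Eop (fun S => h S ^+ 2) S.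
Proof.
rewrite Eh2 lerD2l /tr.
have sq_ge0 : forall l, 0 <= gam * ((l \in S)%:R - (c \in S)%:R) ^+ 2.
  by move=> l; rewrite mulr_ge0 ?sqr_ge0 // ltW // gam_gt0.
case E: (_ && _) => /=; last by rewrite mulr0 sumr_ge0.
case/andP: E => Sn0 ST.
have [l lc lS] := @trans_ex S Sn0 ST.
rewrite (bigD1 l) //= mulr1 -[leLHS]addr0 lerD ?sumr_ge0 //.
by move: lS; case: (l \in S); case: (c \in S) => //= _; rewrite ?subr0 ?sub0r ?sqrrN expr1n mulr1.
Qed.

Lemma trans_ge0 S S' : 0 <= trans (star c) d 1 S S'.
Proof.
rewrite /trans addr_ge0 // mulr_ge0 ?subr_ge0 //.
- apply: sumr_ge0 => v _; rewrite mulr_ge0 ?invr_ge0 ?ler0n //.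
  apply: sumr_ge0 => u _; rewrite mulr_ge0 ?ler0n // divr_ge0 ?fit1 ?ler01 //.
  by apply: sumr_ge0 => w _; rewrite fit1 ler01.
- apply: sumr_ge0 => u _; rewrite mulr_ge0 //.
    by rewrite divr_ge0 ?fit1 ?ler01 // sumr_ge0 // => w _; rewrite fit1 ler01.
  by apply: sumr_ge0 => v _; rewrite mulr_ge0 ?invr_ge0 ?ler0n.
Qed.

Variable S0 : {set 'I_n.+2}.
Definition pt t S := tprob (star c) d 1 t S0 S.
Definition m t (f : {set 'I_n.+2} -> R) := \sum_S pt t S * f S.

Lemma pt_ge0 t S : 0 <= pt t S.
Proof.
elim: t S => [|t IH] S; first by rewrite /pt /= ler0n.
by rewrite /pt /=; apply: sumr_ge0 => S1 _; rewrite mulr_ge0 ?trans_ge0 ?IH.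
Qed.

Lemma m_succ t f : m t.+1 f = m t (Eop f).
Proof.
rewrite /m /pt /=.
under eq_bigr do rewrite big_distrl /=.
rewrite exchange_big /=; apply: eq_bigr => S _.
rewrite -transE big_distrr /=; apply: eq_bigr => S' _; by rewrite mulrA.
Qed.

Lemma m0 f : m 0 f = f S0.
Proof.
rewrite /m /pt /= (bigD1 S0) //= eqxx mul1r big1 ?addr0 // => S /negbTE.
by rewrite eq_sym => ->; rewrite mul0r.
Qed.

Lemma m_h t : m t h = h S0.
Proof.
elim: t => [|t IH]; first by rewrite m0.
by rewrite m_succ -IH; apply: eq_bigr => S _; rewrite Eh.
Qed.

Lemma m_h2_le t : m t (fun S => h S ^+ 2) <= h S0.
Proof.
rewrite -(m_h t); apply: ler_sum => S _; rewrite ler_wpM2l ?pt_ge0 //.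
by rewrite expr2 -[leRHS]mulr1 ler_wpM2l ?h_ge0 ?h_le1.
Qed.

Lemma m_h2_ge t : gam * \sum_(0 <= s < t) m s tr + h S0 ^+ 2 <= m t (fun S => h S ^+ 2).
Proof.
elim: t => [|t IH]; first by rewrite big_nil mulr0 add0r m0.
rewrite big_nat_recr //= mulrDr -addrA [_ * m t tr + _]addrC addrA.
apply: le_trans (lerD IH (lexx _)) _.
rewrite m_succ /m mulr_sumr -big_split /=; apply: ler_sum => S _.
rewrite (_ : _ + _ = pt t S * (h S ^+ 2 + gam * tr S)); last by ring.
by rewrite ler_wpM2l ?pt_ge0 ?Eh2_ge.
Qed.

Lemma bounds t : 0 <= h S0 - pt t [set: 'I_n.+2] <= m t tr.
Proof.
have trT : tr [set: 'I_n.+2] = 0 by rewrite /tr eqxx andbF.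
have -> : h S0 - pt t [set: 'I_n.+2] = \sum_(S | S != [set: 'I_n.+2]) pt t S * h S.
  by rewrite -(m_h t) /m (bigD1 [set: 'I_n.+2]) //= hT mulr1 addrAC subrr add0r.
have -> : m t tr = \sum_(S | S != [set: 'I_n.+2]) pt t S * tr S.
  by rewrite /m (bigD1 [set: 'I_n.+2]) //= trT mulr0 add0r.
apply/andP; split.
  by apply: sumr_ge0 => S _; rewrite mulr_ge0 ?pt_ge0 ?h_ge0.
apply: ler_sum => S ST; rewrite ler_wpM2l ?pt_ge0 // /tr ST andbT.
case: eqP => [->|_]; first by rewrite h0.
exact: h_le1.
Qed.
Definition Tset := [set: 'I_n.+2].
Local Open Scope classical_set_scope.
Lemma fp_h : fp_is (star c) d 1 S0 (h S0).
Proof.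
pose q t := m t tr.
have q0 t : 0 <= q t by case/andP: (bounds t) => H1 H2; exact: le_trans H1 H2.
have qsum t : \sum_(0 <= s < t) q s <= gam^-1.
  have H1 := m_h2_ge t; have H2 := m_h2_le t; have H3 := h_le1 S0.
  have H4 : 0 <= h S0 ^+ 2 by rewrite sqr_ge0.
  have H5 : gam * \sum_(0 <= s < t) q s <= 1.
    by apply: le_trans (h_le1 S0); apply: le_trans H2; apply: le_trans H1; rewrite lerDl.
  by rewrite -(ler_pM2l gam_gt0) mulfV // gt_eqF // gam_gt0.
have qcvg : q @ \oo --> 0.
  apply: cvg_series_cvg_0; apply: nondecreasing_is_cvgn.
    exact: (@nondecreasing_series _ q xpredT 0).
  by exists gam^-1 => _ [t _ <-]; exact: qsum.
have gcvg : (fun t => h S0 - pt t Tset) @ \oo --> 0.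
  apply: (@squeeze_cvgr _ _ _ _ (fun _ => 0) q) => //; last exact: cvg_cst.
  by near=> t; exact: bounds.
rewrite /fp_is (_ : (fun t => _) = fun t => h S0 - (h S0 - pt t Tset)); last first.
  by apply: funext => t; rewrite subKr.
rewrite -[X in _ --> X]subr0; apply: cvgB => //; exact: cvg_cst.
Unshelve. all: by end_near.
Qed.
End Star.

Local Open Scope classical_set_scope.
Theorem mainTheorem6 (R : realType) (N : nat) (hN : (2 <= N)%N) (c : 'I_N)
    (delta : R) (hdelta : 0 <= delta <= 1) :
  (forall i : 'I_N, i != c ->
     fp_is (star c) delta 1 [set i]
       ((1 + (1 - delta) * (N - 2)%:R) /
        ((1 - delta) * ((N - 2)%:R) ^+ 2 + 2 * (N - 1)%:R)))
  /\
  fp_is (star c) delta 1 [set c]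
    ((1 + delta * (N - 2)%:R) /
     ((1 - delta) * ((N - 2)%:R) ^+ 2 + 2 * (N - 1)%:R)).
Proof.
move: hN c; case: N => [|[|n]] // _ c.
case/andP: hdelta => hd0 hd1.
rewrite !subSS !subn0; split.
  move=> i ic; have := @fp_h R n c delta hd0 hd1 [set i].
  by rewrite h1 /pi (negbTE ic).
have := @fp_h R n c delta hd0 hd1 [set c].
by rewrite h1 /pi eqxx.
Qed.
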